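(* Consider the algorithm AOD described in the context, with known horizon $T$, under assumptions (A1)–(A3). Let $\mathbf{u}_1,\ldots,\mathbf{u}_{T+1}\in\Omega$ and $P_T=\sum_{t=1}^T\|\mathbf{u}_{t+1}-\mathbf{u}_t\|_2$. Let $s=\lceil\log_2T\rceil$ and suppose $D2^{i-1}<P_T\le D2^i$ for some $i\in\{1,\ldots,s\}$. Then \[ \sum_{t=1}^T f_t(\mathbf{w}_t)-\sum_{t=1}^T f_t(\mathbf{u}_t)\le\Big(\frac{DG}{2}+\frac{3G}{2}\sqrt{2DP_T}+\sqrt{3c(T)\Big(1+\frac{2P_T}{D}\Big)}\Big)\sqrt{T}, \] where $c(T)=1+\ln T+\ln(1+\log_2 T)+\ln\frac{5+3\ln(1+T)}{2}$.
   Context: Online convex optimization: $\Omega\subseteq\mathbb{R}^d$ convex; in round $t=1,\ldots,T$ the learner plays $\mathbf{w}_t\in\Omega$, then a convex $f_t:\Omega\to\mathbb{R}$ is revealed. Assumptions: (A1) $\|\nabla f_t(\mathbf{w})\|_2\le G$ for all $\mathbf{w}\in\Omega$, $t\in[T]$; (A2) $\mathbf{0}\in\Omega$ and $\max_{\mathbf{w},\mathbf{w}'\in\Omega}\|\mathbf{w}-\mathbf{w}'\|_2\le D$; (A3) $0\le f_t\le1$ on $\Omega$. $\Pi_\Omega$ is Euclidean projection. Dense geometric covering intervals: $\mathcal{D}=\bigcup_{k\ge0,\,2^k\le T}\mathcal{D}_k$, $\mathcal{D}_k=\{[(i-1)2^k+1,\,i2^k]: i=1,2,\ldots\}$. Algorithm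 AOD: for each $I\in\mathcal{D}$ an expert $E_I$ runs online gradient descent $\mathbf{w}_{t+1,I}=\Pi_\Omega[\mathbf{w}_{t,I}-\eta_I\nabla f_t(\mathbf{w}_{t,I})]$, $\eta_I=D/(G\sqrt{|I|})$, over rounds $t\in I$; its initial point is arbitrary if $\min I=1$, and otherwise is the next iterate of the expert of the preceding same-length interval $[\min I-|I|,\min I-1]$ after processing $f_{\min I-1}$. Active experts at round $t$: $\mathcal{A}_t=\{E_I:I\in\mathcal{D},t\in I\}$. Meta-algorithm (AdaNormalHedge): $\Phi(R,C)=\exp([R]_+^2/(3C))$, $[x]_+=\max(0,x)$, $\Phi(0,0)=1$, $w(R,C)=\tfrac12(\Phi(R+1,C+1)-\Phi(R-1,C+1))$, $R_{t-1,I}=\sum_{u=\min I}^{t-1}(f_u(\mathbf{w}_u)-f_u(\mathbf{w}_{u,I}))$, $C_{t-1,I}=\sum_{u=\min I}^{t-1}|f_u(\mathbf{w}_u)-f_u(\mathbf{w}_{u,I})|$, $p_{t,I}=w(R_{t-1,I},C_{t-1,I})/\sum_{E_{I'}\in\mathcal{A}_t}w(R_{t-1,I'},C_{t-1,I'})$, played point $\mathbf{w}_t=\sum_{E_I\in\mathcal{A}_t}p_{t,I}\mathbf{w}_{t,I}$. *)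

(* Defs.v *)
From HB Require Import structures.
From mathcomp Require Import all_boot all_order all_algebra.
From mathcomp Require Import all_classical all_reals all_analysis.
Set Implicit Arguments. Unset Strict Implicit. Unset Printing Implicit Defensive.
Import Order.TTheory GRing.Theory Num.Theory.
Local Open Scope ring_scope.

Section AOD.
Variables (R : realType) (d : nat).
Local Notation vec := 'rV[R]_d.

Definition dotv (x y : vec) : R := \sum_(j < d) x 0 j * y 0 j.
Definition norm2 (x : vec) : R := Num.sqrt (dotv x x).

Definition convex_setv (Omega : vec -> Prop) : Prop :=
  forall x y (a : R), Omega x -> Omega y -> 0 <= a -> a <= 1 ->
    Omega (a *: x + (1 - a) *: y).

Definition convex_fun_on (Omega : vec -> Prop) (h : vec -> R) : Prop :=
  forall x y (a : R), Omega x -> Omega y -> 0 <= a -> a <= 1 ->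
    h (a *: x + (1 - a) *: y) <= a * h x + (1 - a) * h y.

Definition is_euclid_proj (Omega : vec -> Prop) (Pi : vec -> vec) : Prop :=
  forall x, Omega (Pi x) /\ (forall y, Omega y -> norm2 (x - Pi x) <= norm2 (x - y)).

(* AdaNormalHedge potential and weight; note [x]_+ = max x 0, and with
   Rocq's convention x/0 = 0 we get Phi 0 0 = exp 0 = 1 as in the paper. *)
Definition pos_part (x : R) : R := Num.max x 0.
Definition Phi (r c : R) : R := expR (pos_part r ^+ 2 / (3 * c)).
Definition anh_weight (r c : R) : R := (Phi (r + 1) (c + 1) - Phi (r - 1) (c + 1)) / 2.

(* learning rate of an expert on an interval of length 2^k *)
Definition eta_lvl (D G : R) (k : nat) : R := D / (G * Num.sqrt (2 ^ k)%:R).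

(* Iterates of the chain of experts at level k (intervals of length 2^k):
   expert E_I with I = [(i-1)2^k+1, i 2^k] plays lvl_iter ... k t for t in I,
   since its initial point is the next iterate of the expert of the preceding
   level-k interval.  t = 1 : the arbitrary initial point x0;
   t+1 : Pi (w_t - eta grad f_t (w_t)). *)
Fixpoint lvl_iter (Pi : vec -> vec) (g : nat -> vec -> vec) (eta : R) (x0 : vec)
    (t : nat) : vec :=
  match t with
  | 0 => x0
  | t'.+1 => if t' is 0 then x0
             else let v := lvl_iter Pi g eta x0 t' in Pi (v - eta *: g t' v)
  end.

(* first round of the unique level-k interval of the covering containing t>=1 *)
Definition istart (k t : nat) : nat := ((t.-1) %/ 2 ^ k) * 2 ^ k + 1.

Section Meta.
Variables (T : nat) (D G : R) (Pi : vec -> vec) (f : nat -> vec -> R)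
  (g : nat -> vec -> vec) (init : nat -> vec) (w : nat -> vec).

Definition expert (k t : nat) : vec := lvl_iter Pi g (eta_lvl D G k) (init k) t.

Definition Rstat (k t : nat) : R :=
  \sum_(istart k t <= s < t) (f s (w s) - f s (expert k s)).
Definition Cstat (k t : nat) : R :=
  \sum_(istart k t <= s < t) `|f s (w s) - f s (expert k s)|.

Definition meta_prob (k t : nat) : R :=
  anh_weight (Rstat k t) (Cstat k t) /
  \sum_(0 <= k' < T.+1 | (2 ^ k' <= T)%N) anh_weight (Rstat k' t) (Cstat k' t).

Definition AOD_plays : Prop :=
  forall t, (1 <= t <= T)%N ->
    w t = \sum_(0 <= k < T.+1 | (2 ^ k <= T)%N) meta_prob k t *: expert k t.
End Meta.
End AOD.

Definition log2r (R : realType) (x : R) : R := ln x / ln 2.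

Definition cT (R : realType) (T : nat) : R :=
  1 + ln (T%:R : R) + ln (1 + log2r (T%:R : R))
    + ln ((5 + 3 * ln (1 + (T%:R : R))) / 2).

(* Main.v *)
Require Import Defs.
From HB Require Import structures.
From mathcomp Require Import all_boot all_order all_algebra.
From mathcomp Require Import all_classical all_reals all_analysis.
From mathcomp Require Import ring lra zify.
Import Order.TTheory GRing.Theory Num.Theory.
Set Implicit Arguments. Unset Strict Implicit. Unset Printing Implicit Defensive.
Local Open Scope ring_scope.


Section R1.
Variable R : realType.

Lemma fact_lb j : (24 * 4 ^ j <= (j + 4)`!)%N.
Proof.
elim: j => [|j IH]; first by [].
rewrite addSn factS expnS mulnCA.
apply: leq_mul; [lia | exact: IH].
Qed.

Lemma geom_quarter m : \sum_(0 <= j < m) ((4:R)^-1) ^+ j <= 4/3.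
Proof.
have H : forall m, (3/4) * \sum_(0 <= j < m) ((4:R)^-1) ^+ j = 1 - ((4:R)^-1)^+m.
  elim=> [|k IH]; first by rewrite big_geq // mulr0 expr0 subrr.
  rewrite big_nat_recr //= mulrDr IH exprS; by field.
have := H m; set S := \sum_(_ <= _ < _) _ => HS.
have : 0 <= ((4:R)^-1)^+m by apply: exprn_ge0.
lra.
Qed.

Lemma expR_ub4 (z : R) : `|z| <= 1 ->
  expR z <= 1 + z + z^+2/2 + z^+3/6 + z^+4/16.
Proof.
move=> hz; rewrite /expR; apply: limr_le; first exact: is_cvg_series_exp_coeff.
near=> n.
have n4 : (4 <= n)%N by near: n; exists 4%N.
rewrite /series /= (big_cat_nat _ (n:=4)) //=.
have -> : \sum_(0 <= k < 4) exp_coeff z k = 1 + z + z^+2/2 + z^+3/6.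
  rewrite big_mkord !big_ord_recl big_ord0 /exp_coeff /=.
  rewrite /bump /=. 
  have -> : (1`!)%:R = 1 :> R by [].
  have -> : (2`!)%:R = 2 :> R by [].
  have -> : (3`!)%:R = 6 :> R by [].
  by rewrite !addn0 !add1n expr0 expr1 !divr1; field.
apply: lerD; first exact: lexx.
have z4 : 0 <= z^+4 by rewrite exprn_even_ge0.
rewrite -{1}[4%N]add0n big_addn.
apply: (le_trans (y := \sum_(0 <= j < n - 4) (z^+4/24) * ((4:R)^-1)^+j)).
  apply: ler_sum => j _; rewrite /exp_coeff /=.
  apply: (le_trans (ler_norm _)).
  rewrite normrM normfV normr_nat normrX.
  have hj : `|z| ^+ (j + 4) <= z^+4.
    have e4 : `|z|^+4 = z^+4 by rewrite -normrX ger0_norm.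
    rewrite exprD e4 -[X in _ <= X]mul1r; apply: ler_wpM2r => //.
    exact: exprn_ile1.
  have fj := fact_lb j.
  have fp : 0 < ((j+4)`!)%:R :> R by rewrite ltr0n fact_gt0.
  have : (24 * 4^j)%:R <= ((j+4)`!)%:R :> R by rewrite ler_nat.
  rewrite natrM natrX => hf.
  rewrite exprVn.
  apply: (le_trans (y := z^+4 / ((j+4)`!)%:R)).
    by apply: ler_wpM2r => //; rewrite invr_ge0 ltW.
  rewrite -mulrA -invfM; apply: ler_wpM2l => //.
  by rewrite lef_pV2 ?posrE // mulr_gt0 // exprn_gt0.
rewrite -mulr_sumr.
have := geom_quarter (n - 4); set S := \sum_(_ <= _ < _) _ => hS.
have : 0 <= S by apply: sumr_ge0 => j _; apply: exprn_ge0; rewrite invr_ge0.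
nra.
Unshelve. all: by end_near.
Qed.
End R1.

Section R2.
Variable R : realType.
Implicit Types x y a b s : R.

Lemma expR_convex s a b : 0 <= s <= 1 ->
  expR ((1 - s) * a + s * b) <= (1 - s) * expR a + s * expR b.
Proof.
move=> /andP[s0 s1].
set m := (1 - s) * a + s * b.
have ha : expR m * (1 + (a - m)) <= expR a.
  have -> : expR a = expR m * expR (a - m) by rewrite -expRD addrC subrK.
  by apply: ler_wpM2l; [exact: expR_ge0 | exact: expR_ge1Dx].
have hb : expR m * (1 + (b - m)) <= expR b.
  have -> : expR b = expR m * expR (b - m) by rewrite -expRD addrC subrK.
  by apply: ler_wpM2l; [exact: expR_ge0 | exact: expR_ge1Dx].
have e : (1 - s) * (1 + (a - m)) + s * (1 + (b - m)) = 1 by rewrite /m; ring.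
have s0' : 0 <= 1 - s by lra.
apply: (le_trans (y := (1 - s) * (expR m * (1 + (a - m))) + s * (expR m * (1 + (b - m))))).
  by rewrite mulrCA [s * _]mulrCA -mulrDr e mulr1.
by apply: lerD; apply: ler_wpM2l.
Qed.

Lemma cosh_ub y : 0 <= y <= 2/3 -> expR y + expR (- y) <= 2 + 9/8 * y^+2.
Proof.
move=> /andP[y0 y1].
have h1 := @expR_ub4 R y; have h2 := @expR_ub4 R (- y).
have ny : `|y| <= 1 by rewrite ger0_norm //; lra.
have nny : `|- y| <= 1 by rewrite normrN.
have := h1 ny; have := h2 nny.
have e3 : (- y)^+3 = - y^+3 by ring.
have e2 : (- y)^+2 = y^+2 by ring.
have e4 : y^+4 = y^+2 * y^+2 by ring.
have e4' : (- y)^+4 = y^+2 * y^+2 by ring.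
rewrite e3 e2 e4 e4'.
have : y^+2 <= 4/9 by rewrite expr2; nra.
have : 0 <= y^+2 by apply: sqr_ge0.
nra.
Qed.

Lemma e_ub : expR (1:R) <= 273/100.
Proof. have := @expR_ub4 R 1; rewrite normr1 lexx expr1n => h; have := h isT; lra. Qed.

Lemma e_lb : 9/4 <= expR (1:R).
Proof.
have -> : expR (1:R) = expR (1/2) * expR (1/2) by rewrite -expRD -splitr.
have h : 3/2 <= expR (1/2 : R) by have := expR_ge1Dx (1/2:R); lra.
nra.
Qed.

Lemma e2_ub : expR (2:R) <= 8.
Proof.
have -> : (2:R) = 1 + 1 by [].
rewrite expRD; have h := e_ub; have h0 := @expR_ge0 R 1; nra.
Qed.

Lemma pp_spec x : (pos_part x = x /\ 0 <= x) \/ (pos_part x = 0 /\ x <= 0).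
Proof.
rewrite /pos_part /Num.max; case: ifP => h.
  by right; split => //; rewrite ltW.
by left; split => //; rewrite leNgt h.
Qed.

Lemma pp_ge0 x : 0 <= pos_part x.
Proof. by case: (pp_spec x) => -[-> h]. Qed.

Lemma pp_ge x : x <= pos_part x.
Proof. by case: (pp_spec x) => -[-> h]. Qed.

Lemma pp_le x y : x <= y -> pos_part x <= pos_part y.
Proof.
move=> h; case: (pp_spec x) => -[-> hx]; last exact: pp_ge0.
by apply: le_trans (pp_ge y).
Qed.

Lemma pp_conv s a b : 0 <= s <= 1 ->
  pos_part ((1 - s) * a + s * b) <= (1 - s) * pos_part a + s * pos_part b.
Proof.
move=> /andP[s0 s1].
have := pp_ge a; have := pp_ge b; have := pp_ge0 a; have := pp_ge0 b.
case: (pp_spec ((1 - s) * a + s * b)) => -[-> h]; nra.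
Qed.

Lemma Phi_ge1 (r c : R) : 0 <= c -> 1 <= Phi r c.
Proof.
move=> c0; rewrite /Phi; apply: le_trans (expR_ge1Dx _); rewrite lerDl divr_ge0 //.
  by rewrite exprn_even_ge0.
by rewrite mulr_ge0.
Qed.

End R2.

Section R3.
Variable R : realType.
Implicit Types x y a b s : R.

Lemma pp_scale s b : 0 <= s -> pos_part (s * b) = s * pos_part b.
Proof.
move=> s0; case: (pp_spec b) => -[-> hb].
  by case: (pp_spec (s * b)) => -[-> h] //; apply/eqP; rewrite eq_le h; nra.
by case: (pp_spec (s * b)) => -[-> h]; [apply/eqP; rewrite eq_le; nra | rewrite mulr0].
Qed.

Lemma pp0 : pos_part (0:R) = 0.
Proof. by case: (pp_spec (0:R)) => -[-> _]. Qed.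

Lemma persp s (C p0 p1 : R) : 0 <= s <= 1 -> 0 < C ->
  ((1 - s) * p0 + s * p1) ^+ 2 / (3 * (C + s)) <=
  (1 - s) * (p0 ^+ 2 / (3 * C)) + s * (p1 ^+ 2 / (3 * (C + 1))).
Proof.
move=> /andP[s0 s1] C0.
have hC : C != 0 by rewrite gt_eqF.
have hC1 : C + 1 != 0 by rewrite gt_eqF // ltr_wpDr.
have hCs : C + s != 0 by rewrite gt_eqF // ltr_wpDr.
rewrite -subr_ge0.
have -> : (1 - s) * (p0 ^+ 2 / (3 * C)) + s * (p1 ^+ 2 / (3 * (C + 1))) -
   ((1 - s) * p0 + s * p1) ^+ 2 / (3 * (C + s)) =
   (s * (1 - s)) * (p0 * (C + 1) - p1 * C) ^+ 2 / (3 * C * (C + 1) * (C + s)).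
  by field; rewrite hC hC1 hCs.
apply: divr_ge0; first by apply: mulr_ge0; [apply: mulr_ge0; lra | apply: sqr_ge0].
apply: mulr_ge0; last by apply: ltW; rewrite ltr_wpDr.
apply: mulr_ge0; last by apply: ltW; rewrite ltr_wpDr.
by apply: mulr_ge0 => //; apply: ltW.
Qed.

Lemma h_conv s (r0 C : R) b : 0 <= s <= 1 -> 0 <= C -> (C = 0 -> r0 = 0) ->
  pos_part ((1 - s) * r0 + s * b) ^+ 2 / (3 * (C + s)) <=
  (1 - s) * (pos_part r0 ^+ 2 / (3 * C)) + s * (pos_part b ^+ 2 / (3 * (C + 1))).
Proof.
move=> hs C0 hC; have /andP[s0 s1] := hs.
have [C00|Cn0] := eqVneq C 0.
  rewrite C00 (hC C00) pp0 !mulr0 add0r add0r pp_scale // expr0n /= mul0r mulr0 add0r add0r.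
  have [->|sn0] := eqVneq s 0; first by rewrite !mul0r.
  rewrite le_eqVlt; apply/orP; left; apply/eqP; by field; rewrite sn0.
have Cp : 0 < C by rewrite lt0r Cn0.
apply: le_trans; last exact: (@persp s C (pos_part r0) (pos_part b) hs Cp).
apply: ler_wpM2r; first by rewrite invr_ge0 mulr_ge0 // addr_ge0.
have := pp_conv r0 b hs; have := pp_ge0 ((1 - s) * r0 + s * b).
have := pp_ge0 r0; have := pp_ge0 b.
set q := pos_part ((1 - s) * r0 + s * b).
move=> h1 h2 h3 h4.
rewrite !expr2; apply: ler_pM => //.
Qed.

Lemma Phi_conv s (r0 C : R) b : 0 <= s <= 1 -> 0 <= C -> (C = 0 -> r0 = 0) ->
  Phi ((1 - s) * r0 + s * b) (C + s) <= (1 - s) * Phi r0 C + s * Phi b (C + 1).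
Proof.
move=> hs C0 hC; rewrite /Phi.
apply: le_trans; last exact: expR_convex.
rewrite ler_expR; exact: h_conv.
Qed.

Lemma CI (r0 C : R) : 0 <= C -> `|r0| <= C ->
  Phi (r0 + 1) (C + 1) + Phi (r0 - 1) (C + 1) <= 2 * Phi r0 C + 14.
Proof.
move=> C0; rewrite ler_norml => /andP[hl hu].
have P0 := Phi_ge1 r0 C0.
have [small|large] : (r0 <= 1 \/ r0 ^+ 2 <= 4 * C) \/ (1 < r0 /\ 4 * C < r0 ^+ 2).
  case: (leP r0 1) => h1; first by left; left.
  case: (leP (r0 ^+ 2) (4 * C)) => h2; first by left; right.
  by right.
- have p1 : pos_part (r0 + 1) ^+ 2 <= 6 * (C + 1).
    case: (pp_spec (r0 + 1)) => -[-> h]; last by rewrite expr0n /= mulr_ge0 // addr_ge0.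
    rewrite expr2; case: small => hs; nra.
  have p2 : pos_part (r0 - 1) ^+ 2 <= pos_part (r0 + 1) ^+ 2.
    have := pp_le (_ : r0 - 1 <= r0 + 1); have := pp_ge0 (r0 - 1).
    rewrite !expr2 => h0 h; apply: ler_pM => //; apply: h; lra.
  have a0 : 0 < 3 * (C + 1) by apply: mulr_gt0 => //; rewrite ltr_wpDl.
  have q1 : Phi (r0 + 1) (C + 1) <= 8.
    apply: le_trans; last exact: e2_ub.
    rewrite /Phi ler_expR ler_pdivrMr //; lra.
  have q2 : Phi (r0 - 1) (C + 1) <= 8.
    apply: le_trans; last exact: e2_ub.
    rewrite /Phi ler_expR ler_pdivrMr //; lra.
  lra.
case: large => h1 h2.
have Cp : 0 < C by lra.
have e1 : pos_part (r0 + 1) = r0 + 1.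
  by case: (pp_spec (r0 + 1)) => -[-> h] //; lra.
have e2 : pos_part (r0 - 1) = r0 - 1.
  by case: (pp_spec (r0 - 1)) => -[-> h] //; lra.
have e0 : pos_part r0 = r0.
  by case: (pp_spec r0) => -[-> h] //; lra.
have hC : C != 0 by rewrite gt_eqF.
have hC1 : C + 1 != 0 by rewrite gt_eqF // ltr_wpDr.
set E := expR ((r0 ^+ 2 + 1) / (3 * (C + 1))).
set y := 2 * r0 / (3 * (C + 1)).
set dl := (r0 ^+ 2 - C) / (3 * (C + 1) * C).
have Ep : 0 < E by apply: expR_gt0.
have f1 : Phi (r0 + 1) (C + 1) = E * expR y.
  by rewrite /Phi e1 -expRD /E /y; congr expR; field; rewrite hC1.
have f2 : Phi (r0 - 1) (C + 1) = E * expR (- y).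
  by rewrite /Phi e2 -expRD /E /y; congr expR; field; rewrite hC1.
have f0 : Phi r0 C = E * expR dl.
  by rewrite /Phi e0 -expRD /E /dl; congr expR; field; rewrite hC hC1.
have y0 : 0 <= y <= 2/3.
  apply/andP; split; first by rewrite /y divr_ge0 // ?mulr_ge0 //; lra.
  by rewrite /y ler_pdivrMr; [lra | apply: mulr_gt0 => //; lra].
have ch := cosh_ub y0.
have dl1 := expR_ge1Dx dl.
have key : 9/16 * y ^+ 2 <= dl.
  have num : 0 <= 4 * (C + 1) * (r0 ^+ 2 - C) - 3 * C * r0 ^+ 2 by nra.
  rewrite -subr_ge0.
  have -> : dl - 9/16 * y ^+ 2 =
     (4 * (C + 1) * (r0 ^+ 2 - C) - 3 * C * r0 ^+ 2) / (12 * (C + 1) ^+ 2 * C).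
    by rewrite /dl /y; field; rewrite hC hC1.
  apply: divr_ge0 => //; apply: mulr_ge0; last lra.
  by apply: mulr_ge0 => //; apply: sqr_ge0.
rewrite f1 f2 f0.
have : E * (expR y + expR (- y)) <= E * (2 * expR dl).
  apply: ler_wpM2l; first exact: ltW.
  lra.
lra.
Qed.

Lemma CL (r0 C r : R) : 0 <= C -> `|r0| <= C -> `|r| <= 1 ->
  Phi (r0 + r) (C + `|r|) <= Phi r0 C + anh_weight r0 C * r + 7.
Proof.
move=> C0 hr0 hr.
have hC : C = 0 -> r0 = 0.
  by move=> C00; apply/eqP; rewrite -normr_le0 -C00.
have ci := CI C0 hr0.
rewrite /anh_weight.
case: (leP 0 r) => r0s.
- rewrite ger0_norm //.
  have hs : 0 <= r <= 1 by rewrite r0s /=; rewrite ger0_norm in hr.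
  have := Phi_conv (r0 + 1) hs C0 hC.
  have -> : (1 - r) * r0 + r * (r0 + 1) = r0 + r by ring.
  have P0 := Phi_ge1 r0 C0.
  move: hs => /andP[_ hs1] hc.
  nra.
- rewrite ltr0_norm //.
  have hs : 0 <= - r <= 1 by rewrite oppr_ge0 ltW //=; rewrite ltr0_norm in hr.
  have := Phi_conv (r0 - 1) hs C0 hC.
  have -> : (1 - - r) * r0 + - r * (r0 - 1) = r0 + r by ring.
  have P0 := Phi_ge1 r0 C0.
  move: hs => /andP[_ hs1] hc.
  nra.
Qed.

Lemma anh_weight_ge0 (r0 C : R) : 0 <= C -> 0 <= anh_weight r0 C.
Proof.
move=> C0; rewrite /anh_weight divr_ge0 // subr_ge0 /Phi ler_expR.
apply: ler_wpM2r; first by rewrite invr_ge0 mulr_ge0 // addr_ge0.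
have := pp_le (_ : r0 - 1 <= r0 + 1); have := pp_ge0 (r0 - 1).
rewrite !expr2 => h0 h; apply: ler_pM => //; apply: h; lra.
Qed.

End R3.

Section R4.
Variable R : realType.

Lemma sqrt_add (c j A B : R) : 0 <= c -> 0 <= j -> 0 <= A -> 0 <= B ->
  Num.sqrt (c * j * A) + Num.sqrt (c * B) <= Num.sqrt (c * (j + 1) * (A + B)).
Proof.
move=> c0 j0 A0 B0.
set X := Num.sqrt (c * j * A); set Y := Num.sqrt (c * B).
have X0 : 0 <= X by apply: sqrtr_ge0.
have Y0 : 0 <= Y by apply: sqrtr_ge0.
have X2 : X ^+ 2 = c * j * A by rewrite sqr_sqrtr // !mulr_ge0.
have Y2 : Y ^+ 2 = c * B by rewrite sqr_sqrtr // mulr_ge0.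
rewrite -(ger0_norm (addr_ge0 X0 Y0)) -sqrtr_sqr ler_sqrt; last first.
  by rewrite !mulr_ge0 // ?addr_ge0.
have key : 2 * X * Y <= c * A + c * j * B.
  have [j00|jn0] := eqVneq j 0.
    have : X = 0 by rewrite /X j00 mulr0 mul0r sqrtr0.
    by move=> ->; rewrite mulr0 mul0r addr_ge0 // !mulr_ge0.
  have jp : 0 < j by rewrite lt0r jn0.
  have h : 0 <= (X - j * Y) ^+ 2 by apply: sqr_ge0.
  have : j * (2 * X * Y) <= j * (c * A + c * j * B).
    rewrite expr2 in X2 Y2 h; rewrite expr2 in h; nra.
  by rewrite ler_pM2l.
rewrite expr2 in X2 Y2; rewrite expr2; nra.
Qed.
End R4.

Section V1.
Variables (R : realType) (d : nat).
Local Notation vec := 'rV[R]_d.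
Implicit Types x y z u v : vec.

Lemma dotvC x y : dotv x y = dotv y x.
Proof. by apply: eq_bigr => j _; rewrite mulrC. Qed.

Lemma dotvDl x y z : dotv (x + y) z = dotv x z + dotv y z.
Proof. by rewrite /dotv -big_split; apply: eq_bigr => j _; rewrite mxE mulrDl. Qed.

Lemma dotvZl (a : R) x y : dotv (a *: x) y = a * dotv x y.
Proof. by rewrite /dotv mulr_sumr; apply: eq_bigr => j _; rewrite mxE mulrA. Qed.

Lemma dotvNl x y : dotv (- x) y = - dotv x y.
Proof. by rewrite -scaleN1r dotvZl mulN1r. Qed.

Lemma dotvBl x y z : dotv (x - y) z = dotv x z - dotv y z.
Proof. by rewrite dotvDl dotvNl. Qed.

Lemma dotvDr x y z : dotv z (x + y) = dotv z x + dotv z y.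
Proof. by rewrite dotvC dotvDl !(dotvC z). Qed.

Lemma dotvZr (a : R) x y : dotv y (a *: x) = a * dotv y x.
Proof. by rewrite dotvC dotvZl dotvC. Qed.

Lemma dotvBr x y z : dotv z (x - y) = dotv z x - dotv z y.
Proof. by rewrite dotvC dotvBl !(dotvC z). Qed.

Lemma dotv_ge0 x : 0 <= dotv x x.
Proof. by apply: sumr_ge0 => j _; rewrite -expr2 sqr_ge0. Qed.

Lemma dotv0l x : dotv 0 x = 0.
Proof. by rewrite -(scale0r 0) dotvZl mul0r. Qed.

Lemma norm2_ge0 x : 0 <= norm2 x.
Proof. exact: sqrtr_ge0. Qed.

Lemma norm2_sq x : norm2 x ^+ 2 = dotv x x.
Proof. by rewrite sqr_sqrtr // dotv_ge0. Qed.

Lemma norm2_le_sq x (c : R) : norm2 x <= c -> dotv x x <= c ^+ 2.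
Proof.
move=> h; rewrite -norm2_sq; have h0 := norm2_ge0 x.
by rewrite !expr2; apply: ler_pM.
Qed.

Lemma norm2_le x y : norm2 x <= norm2 y -> dotv x x <= dotv y y.
Proof. by move=> h; rewrite -!norm2_sq !expr2; apply: ler_pM => //; apply: norm2_ge0. Qed.

Lemma CS x y : dotv x y <= norm2 x * norm2 y.
Proof.
set A := dotv x x; set B := dotv y y; set C := dotv x y.
have q : forall t : R, 0 <= A - 2 * t * C + t ^+ 2 * B.
  move=> t; have := dotv_ge0 (x - t *: y).
  rewrite dotvBl !dotvBr !dotvZl !dotvZr (dotvC y x) -/A -/B -/C.
  by have -> : A - t * C - (t * C - t * (t * B)) = A - 2 * t * C + t ^+ 2 * B by ring.
have A0 : 0 <= A := dotv_ge0 x; have B0 : 0 <= B := dotv_ge0 y.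
case: (leP C 0) => C0.
  by apply: le_trans C0 _; apply: mulr_ge0; apply: norm2_ge0.
have [B00|Bn0] := eqVneq B 0.
  have := q ((A + 1) / (2 * C)); rewrite B00 mulr0 addr0.
  have -> : 2 * ((A + 1) / (2 * C)) * C = A + 1 by field; rewrite gt_eqF.
  lra.
have Bp : 0 < B by rewrite lt0r Bn0.
have := q (C / B).
have -> : A - 2 * (C / B) * C + (C / B) ^+ 2 * B = A - C ^+ 2 / B by field.
rewrite subr_ge0 ler_pdivrMr // => h.
rewrite /norm2 -sqrtrM // -(ger0_norm (ltW C0)) -sqrtr_sqr ler_sqrt //.
by apply: mulr_ge0.
Qed.

Lemma CSN x y : - dotv x y <= norm2 x * norm2 y.
Proof.
have := CS (- x) y; rewrite dotvNl.
have -> : norm2 (- x) = norm2 x by rewrite /norm2 dotvNl dotvC dotvNl opprK.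
done.
Qed.

Lemma proj_nonexp (Omega : vec -> Prop) (Pi : vec -> vec) x u :
  convex_setv Omega -> is_euclid_proj Omega Pi -> Omega u ->
  dotv (Pi x - u) (Pi x - u) <= dotv (x - u) (x - u).
Proof.
move=> cvx pr Ou.
have [Op near] := pr x.
set p := Pi x in Op near *.
set v := x - p; set e := u - p.
have Ea : forall a : R, x - (a *: u + (1 - a) *: p) = v - a *: e.
  by move=> a; apply/rowP => j; rewrite /v /e !mxE; ring.
have Exu : x - u = v - e by apply/rowP => j; rewrite /v /e !mxE; ring.
have Epu : p - u = - e by apply/rowP => j; rewrite /e !mxE; ring.
have Exp : x - p = v by [].
clearbody v e.
have key : forall a : R, 0 <= a -> a <= 1 -> 2 * a * dotv v e <= a ^+ 2 * dotv e e.
  move=> a a0 a1.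
  have Oa := cvx u p a Ou Op a0 a1.
  have := norm2_le (near _ Oa).
  rewrite Ea Exp.
  rewrite !dotvBl !dotvBr !dotvZl !dotvZr ?(dotvC e v).
  rewrite expr2; lra.
have ve : dotv v e <= 0.
  rewrite leNgt; apply/negP => hv.
  have ee := dotv_ge0 e.
  set a := dotv v e / (dotv v e + dotv e e).
  have den : 0 < dotv v e + dotv e e by lra.
  have a0 : 0 < a by apply: divr_gt0.
  have a1 : a <= 1 by rewrite ler_pdivrMr //; lra.
  have := key a (ltW a0) a1.
  have -> : a ^+ 2 * dotv e e = a * (a * dotv e e) by rewrite expr2 mulrA.
  have ha : a * dotv e e <= dotv v e.
    rewrite /a mulrC mulrA ler_pdivrMr //; nra.
  nra.
rewrite Exu Epu.
rewrite dotvNl dotvC dotvNl opprK !dotvBl !dotvBr (dotvC e v).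
have := dotv_ge0 v; lra.
Qed.

Lemma shift_bound x u u' (D : R) : norm2 (x - u) <= D -> norm2 (x - u') <= D ->
  dotv (x - u') (x - u') <= dotv (x - u) (x - u) + 2 * D * norm2 (u' - u).
Proof.
move=> h1 h2.
have E : x - u' = (x - u) - (u' - u) by apply/rowP => j; rewrite !mxE; ring.
rewrite E in h2 *.
move: h1 h2; move: (x - u) (u' - u) => a dl h1 h2.
have c1 := CSN a dl; have c2 := CSN (a - dl) dl.
rewrite dotvBl in c2.
have n0 := norm2_ge0 dl.
have m1 : norm2 a * norm2 dl <= D * norm2 dl by apply: ler_wpM2r.
have m2 : norm2 (a - dl) * norm2 dl <= D * norm2 dl by apply: ler_wpM2r.
rewrite !dotvBl !dotvBr (dotvC dl a).
lra.
Qed.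
End V1.

Section V2.
Variables (R : realType) (d : nat).
Local Notation vec := 'rV[R]_d.

Lemma psum0 (s : seq nat) (P : pred nat) (q : nat -> R) :
  (forall i, P i -> 0 <= q i) -> \sum_(i <- s | P i) q i = 0 ->
  forall i, i \in s -> P i -> q i = 0.
Proof.
move=> H0; elim: s => [|a s IH] //= Hs i.
rewrite inE => /orP[/eqP -> | iS] Pi.
  move: Hs; rewrite big_cons Pi => Hs.
  have : 0 <= \sum_(j <- s | P j) q j by apply: sumr_ge0.
  have := H0 a Pi; lra.
apply: IH => //.
move: Hs; rewrite big_cons; case Pa: (P a) => // Hs.
have : 0 <= \sum_(j <- s | P j) q j by apply: sumr_ge0.
have := H0 a Pa; lra.
Qed.

Lemma sum_scale (s : seq nat) (P : pred nat) (q : nat -> R) (x : nat -> vec) (c : R) :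
  (forall i, P i -> 0 <= q i) ->
  \sum_(i <- s | P i) (q i * c) *: x i =
  ((\sum_(i <- s | P i) q i) * c) *: \sum_(i <- s | P i) (q i / (\sum_(i <- s | P i) q i)) *: x i.
Proof.
move=> H0; set Q := \sum_(i <- s | P i) q i.
have [Q0|Qn0] := eqVneq Q 0.
  rewrite Q0 mul0r scale0r; apply: big1_seq => i /andP[Pi iS].
  by rewrite (psum0 H0 Q0 iS Pi) mul0r scale0r.
rewrite scaler_sumr; apply: eq_bigr => i Pi; rewrite scalerA; congr (_ *: _).
by field.
Qed.

Lemma jensen (Omega : vec -> Prop) (h : vec -> R) (s : seq nat) (P : pred nat)
    (q : nat -> R) (x : nat -> vec) :
  convex_setv Omega -> Omega 0 -> convex_fun_on Omega h ->
  (forall i, P i -> 0 <= q i) -> (forall i, P i -> Omega (x i)) ->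
  Omega (\sum_(i <- s | P i) (q i / \sum_(j <- s | P j) q j) *: x i) /\
  (\sum_(j <- s | P j) q j) * h (\sum_(i <- s | P i) (q i / \sum_(j <- s | P j) q j) *: x i)
    <= \sum_(i <- s | P i) q i * h (x i).
Proof.
move=> cvx O0 cvf H0 Hx.
elim: s => [|a s [IH1 IH2]].
  by rewrite !big_nil mul0r; split.
rewrite !big_cons; case Pa: (P a) => //.
set Q' := \sum_(j <- s | P j) q j in IH1 IH2 *.
set y' := \sum_(i <- s | P i) (q i / Q') *: x i in IH1 IH2 *.
set S' := \sum_(i <- s | P i) q i * h (x i) in IH2 *.
have Q'0 : 0 <= Q' by apply: sumr_ge0.
have qa := H0 a Pa.
set Q := q a + Q'.
have -> : \sum_(j <- s | P j) (q j / Q) *: x j = (Q' * Q^-1) *: y'.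
  exact: sum_scale.
have [Q0|Qn0] := eqVneq Q 0.
  have qa0 : q a = 0 by rewrite /Q in Q0; lra.
  have Q'00 : Q' = 0 by rewrite /Q in Q0; lra.
  rewrite Q0 invr0 !mulr0 !scale0r addr0 mul0r; split => //.
  rewrite qa0 mul0r add0r; apply: le_trans IH2; rewrite Q'00 mul0r.
  done.
have Qp : 0 < Q by rewrite lt0r Qn0 /Q addr_ge0.
set al := q a / Q.
have a0 : 0 <= al by rewrite divr_ge0 // ltW.
have a1 : al <= 1 by rewrite ler_pdivrMr // mul1r /Q lerDl.
have e1 : Q' * Q^-1 = 1 - al by rewrite /al /Q; field; exact: Qn0.
rewrite e1; split; first by apply: cvx => //; apply: Hx.
apply: (le_trans (y := Q * (al * h (x a) + (1 - al) * h y'))).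
  by apply: ler_wpM2l; [exact: ltW | apply: cvf => //; apply: Hx].
have -> : Q * (al * h (x a) + (1 - al) * h y') = q a * h (x a) + Q' * h y'.
  by rewrite /al /Q; field; exact: Qn0.
by rewrite lerD2l.
Qed.
End V2.

Lemma istart_le k t : (0 < t)%N -> (istart k t <= t)%N.
Proof.
move=> t0; rewrite /istart; have := leq_divM t.-1 (2 ^ k); lia.
Qed.

Lemma istart_ge1 k t : (1 <= istart k t)%N.
Proof. by rewrite /istart addn1. Qed.

Lemma istart1 k : istart k 1 = 1%N.
Proof. by rewrite /istart /= div0n mul0n. Qed.

Lemma istartS k t : (0 < t)%N -> istart k t.+1 = istart k t \/ istart k t.+1 = t.+1.
Proof.
move=> t0; rewrite /istart /=.
set L := (2 ^ k)%N.
have L0 : (0 < L)%N by rewrite expn_gt0.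
set a := (t.-1 %/ L)%N; set b := (t %/ L)%N.
have h1 : (a * L <= t.-1)%N by apply: leq_divM.
have h2 : (t.-1 < a.+1 * L)%N by apply: ltn_ceil.
have h3 : (b * L <= t)%N by apply: leq_divM.
have ab : (a <= b)%N by apply: leq_div2r; lia.
case: (ltngtP a b) => hab; last by left; rewrite hab.
  have h4 : (a.+1 * L <= b * L)%N by rewrite leq_mul2r hab orbT.
  right; rewrite mulSn in h2 h4; lia.
by move: ab; rewrite leqNgt hab.
Qed.

Definition nblk (L n : nat) : nat := ((n + L.-1) %/ L)%N.

Lemma nblk_mul L j : (0 < L)%N -> nblk L (j * L) = j.
Proof.
move=> L0; rewrite /nblk divnMDl // divn_small ?addn0 //; lia.
Qed.

Lemma nblk_pos L n : (0 < L)%N -> (0 < n)%N -> nblk L n = (n.-1 %/ L).+1.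
Proof.
move=> L0 n0; rewrite /nblk.
have -> : (n + L.-1 = n.-1 + L)%N by lia.
by rewrite divnDr ?dvdnn // divnn L0 addn1.
Qed.

Lemma istart_blk k n : (0 < n)%N -> (istart k n).-1 = ((n.-1 %/ 2 ^ k) * 2 ^ k)%N.
Proof. by move=> n0; rewrite /istart addn1. Qed.

Ltac xlra := pose proof I as Hd__; clear Hd__; lra.
Ltac xnra := pose proof I as Hd__; clear Hd__; nra.
Section A1.
Variables (R : realType) (d T : nat) (Omega : 'rV[R]_d -> Prop) (D G : R)
    (Pi : 'rV[R]_d -> 'rV[R]_d) (f : nat -> 'rV[R]_d -> R)
    (g : nat -> 'rV[R]_d -> 'rV[R]_d) (init : nat -> 'rV[R]_d)
    (w : nat -> 'rV[R]_d).
Hypothesis cvx : convex_setv Omega.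
Hypothesis proj : is_euclid_proj Omega Pi.
Hypothesis D0 : 0 < D.
Hypothesis G0 : 0 < G.
Hypothesis fcvx : forall t, (1 <= t <= T)%N -> convex_fun_on Omega (f t).
Hypothesis subg : forall t x y, (1 <= t <= T)%N -> Omega x -> Omega y ->
     f t x + dotv (g t x) (y - x) <= f t y.
Hypothesis gradb : forall t x, (1 <= t <= T)%N -> Omega x -> norm2 (g t x) <= G.
Hypothesis O0 : Omega 0.
Hypothesis diam : forall x y, Omega x -> Omega y -> norm2 (x - y) <= D.
Hypothesis fb : forall t x, (1 <= t <= T)%N -> Omega x -> 0 <= f t x <= 1.
Hypothesis initO : forall k, Omega (init k).
Hypothesis plays : AOD_plays T D G Pi f g init w.

Local Notation x := (expert D G Pi g init).
Local Notation Rs := (Rstat D G Pi f g init w).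
Local Notation Cs := (Cstat D G Pi f g init w).
Definition rr k t := f t (w t) - f t (x k t).
Local Notation wt k t := (anh_weight (Rs k t) (Cs k t)).
Definition lev k := (2 ^ k <= T)%N.

Lemma x_in k t : Omega (x k t).
Proof.
rewrite /expert; elim: t => [|t IH] //=.
case: t IH => [|t] IH //=.
by have [] := proj (lvl_iter Pi g (eta_lvl D G k) (init k) t.+1 -
   eta_lvl D G k *: g t.+1 (lvl_iter Pi g (eta_lvl D G k) (init k) t.+1)).
Qed.

Lemma x_step k t : (1 <= t)%N ->
  x k t.+1 = Pi (x k t - eta_lvl D G k *: g t (x k t)).
Proof. by case: t. Qed.

Lemma Cs_ge0 k t : 0 <= Cs k t.
Proof. by apply: sumr_ge0 => i _; apply: normr_ge0. Qed.

Lemma Rs_le_Cs k t : `|Rs k t| <= Cs k t.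
Proof. exact: ler_norm_sum. Qed.

Lemma wt_ge0 k t : 0 <= wt k t.
Proof. exact: anh_weight_ge0 (Cs_ge0 k t). Qed.

Lemma w_jensen t : (1 <= t <= T)%N ->
  Omega (w t) /\ \sum_(0 <= k < T.+1 | lev k) wt k t * rr k t <= 0.
Proof.
move=> ht.
have J := @jensen R d Omega (f t) (index_iota 0 T.+1) lev (fun k => wt k t) (fun k => x k t)
   cvx O0 (fcvx ht) (fun k _ => wt_ge0 k t) (fun k _ => x_in k t).
have wE : w t = \sum_(i <- index_iota 0 T.+1 | lev i)
     (wt i t / \sum_(j <- index_iota 0 T.+1 | lev j) wt j t) *: x i t.
  by rewrite (plays ht).
rewrite -wE in J; case: J => J1 J2; split => //.
have -> : \sum_(0 <= k < T.+1 | lev k) wt k t * rr k t =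
   (\sum_(0 <= k < T.+1 | lev k) wt k t) * f t (w t) -
   \sum_(0 <= k < T.+1 | lev k) wt k t * f t (x k t).
  rewrite mulr_suml -sumrB; apply: eq_bigr => k _; rewrite /rr; ring.
by rewrite subr_le0.
Qed.

Lemma rr_bound k t : (1 <= t <= T)%N -> `|rr k t| <= 1.
Proof.
move=> ht; have [Ow _] := w_jensen ht.
have := fb ht Ow; have := fb ht (x_in k t).
rewrite /rr ler_norml => /andP[h1 h2] /andP[h3 h4]; apply/andP; split; lra.
Qed.

Lemma RC_step k t : (1 <= t)%N ->
  (Rs k t.+1 = Rs k t + rr k t /\ Cs k t.+1 = Cs k t + `|rr k t|) \/
  (Rs k t.+1 = 0 /\ Cs k t.+1 = 0).
Proof.
move=> t0; have hle := istart_le k t0.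
case: (istartS k t0) => e.
  left; rewrite /Rstat /Cstat e !big_nat_recr //=.
right; rewrite /Rstat /Cstat e !big_geq //.
Qed.

Lemma RC1 k : Rs k 1 = 0 /\ Cs k 1 = 0.
Proof. by rewrite /Rstat /Cstat istart1 !big_geq. Qed.

Definition Kr : R := \sum_(0 <= k < T.+1 | lev k) 1.
Definition V t := \sum_(0 <= k < T.+1 | lev k) Phi (Rs k t) (Cs k t).

Lemma Kr_ge0 : 0 <= Kr.
Proof. by apply: sumr_ge0. Qed.

Lemma Phi00 : Phi 0 0 = 1 :> R.
Proof. by rewrite /Phi pp0 expr0n /= mul0r expR0. Qed.

Lemma step_sum t : (1 <= t <= T)%N ->
  \sum_(0 <= k < T.+1 | lev k) Phi (Rs k t + rr k t) (Cs k t + `|rr k t|) <= V t + 7 * Kr.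
Proof.
move=> ht.
apply: le_trans.
  apply: ler_sum => k _.
  exact: (CL (Cs_ge0 k t) (Rs_le_Cs k t) (rr_bound k ht)).
rewrite big_split big_split /= -/(V t).
have [_ J] := w_jensen ht.
rewrite /Kr mulr_sumr mulr1.
lra.
Qed.

Lemma V_next t : (1 <= t <= T)%N ->
  V t.+1 <= \sum_(0 <= k < T.+1 | lev k) Phi (Rs k t + rr k t) (Cs k t + `|rr k t|) + Kr.
Proof.
move=> ht; rewrite /Kr -big_split /=; apply: ler_sum => k _.
have t1 : (1 <= t)%N by case/andP: ht.
have P1 : 1 <= Phi (Rs k t + rr k t) (Cs k t + `|rr k t|).
  by apply: Phi_ge1; apply: addr_ge0; [exact: Cs_ge0 | exact: normr_ge0].
case: (RC_step k t1) => -[-> ->]; first by rewrite lerDl.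
rewrite Phi00; lra.
Qed.

Lemma V_bound t : (1 <= t <= T)%N -> V t <= Kr + (t.-1)%:R * 8 * Kr.
Proof.
elim: t => [|t IH] // ht.
case: t IH ht => [|t] IH ht.
  rewrite /V /= !mul0r addr0 /Kr; apply: ler_sum => k _.
  by have [-> ->] := RC1 k; rewrite Phi00.
have ht' : (1 <= t.+1 <= T)%N by move: ht; case/andP => _ h; apply/andP; split => //; lia.
have := IH ht'; have := V_next ht'; have := step_sum ht'.
have K0 := Kr_ge0.
rewrite /= -[t.+1]addn1 natrD.
lra.
Qed.

Lemma sum_single (F : nat -> R) k : (k < T.+1)%N -> lev k ->
  (forall i, lev i -> 0 <= F i) ->
  F k <= \sum_(0 <= i < T.+1 | lev i) F i.
Proof.
move=> kT lk F0.
rewrite big_mkcond (bigD1_seq k) /= ?lk; first last.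
- exact: (iota_uniq 0 T.+1).
- by rewrite mem_index_iota.
rewrite lerDl; apply: sumr_ge0 => i _; case: ifP => // li; exact: F0.
Qed.

Lemma Phi_full_bound k t : (k < T.+1)%N -> lev k -> (1 <= t <= T)%N ->
  Phi (Rs k t + rr k t) (Cs k t + `|rr k t|) <= 8 * t%:R * Kr.
Proof.
move=> kT lk ht.
apply: le_trans.
  apply: (sum_single (F := fun k => Phi (Rs k t + rr k t) (Cs k t + `|rr k t|))) kT lk _.
  move=> i _; apply: le_trans (Phi_ge1 _ _); first by [].
  by apply: addr_ge0; [exact: Cs_ge0 | exact: normr_ge0].
have := step_sum ht; have := V_bound ht; have K0 := Kr_ge0.
have t1 : (1 <= t)%N by case/andP: ht.
have -> : t%:R = (t.-1)%:R + 1 :> R by rewrite natr1 prednK.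
lra.
Qed.

Lemma Rf_bound k t (c : R) : (k < T.+1)%N -> lev k -> (1 <= t <= T)%N ->
  8 * T%:R * Kr <= expR c ->
  Rs k t + rr k t <= Num.sqrt (3 * (Cs k t + `|rr k t|) * c).
Proof.
move=> kT lk ht hc.
have Pb := Phi_full_bound kT lk ht.
have tT : t%:R <= T%:R :> R by rewrite ler_nat; case/andP: ht.
have K0 := Kr_ge0.
have : Phi (Rs k t + rr k t) (Cs k t + `|rr k t|) <= expR c.
  apply: le_trans Pb _; apply: le_trans hc; apply: ler_wpM2r => //.
  by apply: ler_wpM2l.
set Rf := Rs k t + rr k t; set Cf := Cs k t + `|rr k t|.
have RC : `|Rf| <= Cf.
  apply: le_trans (ler_normD _ _) _; apply: lerD => //; exact: Rs_le_Cs.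
have Cf0 : 0 <= Cf by apply: le_trans RC.
rewrite /Phi ler_expR => h.
have [C00|Cn0] := eqVneq Cf 0.
  have : Rf <= 0 by apply: le_trans (ler_norm Rf) _; rewrite -C00.
  move=> h2; apply: le_trans h2 _; exact: sqrtr_ge0.
have Cp : 0 < Cf by rewrite lt0r Cn0.
rewrite ler_pdivrMr in h; last by rewrite mulr_gt0.
have p0 := pp_ge0 Rf.
have h' : pos_part Rf ^+ 2 <= 3 * Cf * c by rewrite mulrC.
apply: le_trans (pp_ge Rf) _.
rewrite -(ger0_norm p0) -sqrtr_sqr ler_sqrt //.
by apply: le_trans h'; apply: sqr_ge0.
Qed.

Lemma sum_abs_le k t : (1 <= t <= T)%N ->
  Cs k t + `|rr k t| <= (t - (istart k t).-1)%:R.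
Proof.
move=> ht; have t1 : (1 <= t)%N by case/andP: ht.
have hle := istart_le k t1.
have a1 := istart_ge1 k t.
have -> : Cs k t + `|rr k t| = \sum_(istart k t <= s < t.+1) `|rr k s|.
  by rewrite big_nat_recr.
apply: (le_trans (y := \sum_(istart k t <= s < t.+1) (1:R))).
  apply: ler_sum_nat => s hs.
  apply: rr_bound.
  move: hs ht => /andP[h1 h2] /andP[h3 h4].
  apply/andP; split; lia.
rewrite sumr_const_nat.
have -> : (t.+1 - istart k t = t - (istart k t).-1)%N by lia.
by [].
Qed.

Lemma meta_bound k (c : R) : (k < T.+1)%N -> lev k -> 0 <= c ->
  8 * T%:R * Kr <= expR c ->
  forall n, (n <= T)%N ->
  \sum_(1 <= t < n.+1) rr k t <= Num.sqrt (3 * c * (nblk (2 ^ k) n)%:R * n%:R).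
Proof.
move=> kT lk c0 hc n; elim/ltn_ind: n => n IH hnT.
have L0 : (0 < 2 ^ k)%N by rewrite expn_gt0.
case: n IH hnT => [|n] IH hnT.
  by rewrite big_geq // mulr0 sqrtr0.
have n1 : (0 < n.+1)%N by [].
have ht : (1 <= n.+1 <= T)%N by rewrite n1 hnT.
have hle := istart_le k n1.
have a1 := istart_ge1 k n.+1.
have na := istart_blk k n1.
set a := istart k n.+1 in hle a1 na *.
set j := (n.+1.-1 %/ 2 ^ k)%N in na.
have ltn' : (a.-1 < n.+1)%N by lia.
have IH' := IH a.-1 ltn' (leq_trans (ltnW ltn') hnT).
rewrite (big_cat_nat _ (n := a)) //=; last by lia.
have e1 : \sum_(1 <= t < a) rr k t = \sum_(1 <= t < a.-1.+1) rr k t by rewrite prednK.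
have e2 : \sum_(a <= t < n.+2) rr k t = Rs k n.+1 + rr k n.+1 by rewrite big_nat_recr.
rewrite e1 e2.
have Rb := Rf_bound kT lk ht hc.
have Cb := sum_abs_le k ht.
rewrite -/a na in Cb.
rewrite na nblk_mul // in IH'.
rewrite nblk_pos // -/j.
set A := (j * 2 ^ k)%N in IH' Cb *.
have AB : (A <= n.+1)%N by rewrite /A -na; lia.
have hB : (3 * (Cs k n.+1 + `|rr k n.+1|) * c) <= 3 * c * (n.+1 - A)%:R.
  have Cf0 : 0 <= Cs k n.+1 + `|rr k n.+1| by apply: addr_ge0; [exact: Cs_ge0 | exact: normr_ge0].
  nra.
have Rb' : Rs k n.+1 + rr k n.+1 <= Num.sqrt (3 * c * (n.+1 - A)%:R).
  apply: le_trans Rb _; rewrite ler_sqrt //.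
  by apply: mulr_ge0 => //; apply: mulr_ge0.
have SA := @sqrt_add R (3 * c) j%:R A%:R (n.+1 - A)%:R.
have e3 : (j.+1)%:R = j%:R + 1 :> R by rewrite -natr1.
have e4 : (n.+1)%:R = A%:R + (n.+1 - A)%:R :> R by rewrite -natrD subnKC.
rewrite e3 e4.
have : Num.sqrt (3 * c * j%:R * A%:R) + Num.sqrt (3 * c * (n.+1 - A)%:R) <=
       Num.sqrt (3 * c * (j%:R + 1) * (A%:R + (n.+1 - A)%:R)).
  by apply: SA => //; apply: mulr_ge0.
rewrite na -/A; lra.
Qed.

Lemma eta_gt0 k : 0 < eta_lvl D G k.
Proof.
rewrite /eta_lvl divr_gt0 // mulr_gt0 // sqrtr_gt0 ltr0n expn_gt0 //.
Qed.

Lemma ogd_step k (u : nat -> 'rV[R]_d) t : (1 <= t <= T)%N -> Omega (u t) -> Omega (u t.+1) ->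
  2 * eta_lvl D G k * (f t (x k t) - f t (u t)) <=
  dotv (x k t - u t) (x k t - u t) - dotv (x k t.+1 - u t.+1) (x k t.+1 - u t.+1)
  + 2 * D * norm2 (u t.+1 - u t) + eta_lvl D G k ^+ 2 * G ^+ 2.
Proof.
move=> ht Ou Ou1.
have t1 : (1 <= t)%N by case/andP: ht.
have et := eta_gt0 k.
set eta := eta_lvl D G k in et *.
have Ox := x_in k t.
have Ox1 := x_in k t.+1.
have sg := subg ht Ox Ou.
have xs := x_step k t1.
have pn := proj_nonexp (x k t - eta *: g t (x k t)) cvx proj Ou.
rewrite -xs in pn.
have sh := shift_bound (diam Ox1 Ou) (diam Ox1 Ou1).
have gb := norm2_le_sq (gradb ht Ox).
move: sg pn sh gb.
set gg := g t (x k t).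
have Ez : x k t - eta *: gg - u t = (x k t - u t) - eta *: gg.
  by apply/rowP => j; rewrite !mxE; ring.
have Eu : u t - x k t = - (x k t - u t) by rewrite opprB.
rewrite Ez Eu.
move: (dotv (x k t.+1 - u t.+1) (x k t.+1 - u t.+1)) => A1.
move: (dotv (x k t.+1 - u t) (x k t.+1 - u t)) => A0.
move: (x k t - u t) => v.
move: (norm2 (u t.+1 - u t)) => nu.
move=> sg pn sh gb.
rewrite !dotvBl !dotvBr !dotvZl !dotvZr (dotvC gg v) in pn.
rewrite dotvC dotvNl in sg.
have m1 : 2 * eta * (f t (x k t) - f t (u t)) <= 2 * eta * dotv v gg.
  by apply: ler_wpM2l; [apply: mulr_ge0 => //; apply: ltW | lra].
have m2 : eta * (eta * dotv gg gg) <= eta ^+ 2 * G ^+ 2.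
  by rewrite mulrA -expr2; apply: ler_wpM2l => //; apply: sqr_ge0.
lra.
Qed.

Lemma ogd_sum k (u : nat -> 'rV[R]_d) :
  (forall t, (1 <= t <= T.+1)%N -> Omega (u t)) ->
  forall n, (n <= T)%N ->
  2 * eta_lvl D G k * \sum_(1 <= t < n.+1) (f t (x k t) - f t (u t)) <=
  dotv (x k 1 - u 1) (x k 1 - u 1) - dotv (x k n.+1 - u n.+1) (x k n.+1 - u n.+1)
  + 2 * D * \sum_(1 <= t < n.+1) norm2 (u t.+1 - u t) + eta_lvl D G k ^+ 2 * G ^+ 2 * n%:R.
Proof.
move=> uO; elim => [|n IH] hn.
  by rewrite !big_geq // !mulr0 subrr !addr0.
have h := IH (ltnW hn).
have ht : (1 <= n.+1 <= T)%N by rewrite hn.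
have u1 : (1 <= n.+1 <= T.+1)%N by apply/andP; split => //; apply: (leq_trans hn).
have u2 : (1 <= n.+2 <= T.+1)%N by apply/andP; split.
have st := ogd_step k ht (uO _ u1) (uO _ u2).
have e1 : \sum_(1 <= t < n.+2) (f t (x k t) - f t (u t)) =
  \sum_(1 <= t < n.+1) (f t (x k t) - f t (u t)) + (f n.+1 (x k n.+1) - f n.+1 (u n.+1)).
  by rewrite big_nat_recr.
have e2 : \sum_(1 <= t < n.+2) norm2 (u t.+1 - u t) =
  \sum_(1 <= t < n.+1) norm2 (u t.+1 - u t) + norm2 (u n.+2 - u n.+1).
  by rewrite big_nat_recr.
rewrite e1 e2 -natr1.
lra.
Qed.

Lemma Kr_bound : (1 <= T)%N -> Kr <= 1 + log2r (T%:R : R).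
Proof.
move=> T1.
set L0 := trunc_log 2 T.
have hL0 : (2 ^ L0 <= T)%N by apply: trunc_logP.
have hL1 : (T < 2 ^ L0.+1)%N by apply: trunc_log_ltn.
have LT : (L0.+1 <= T.+1)%N by have := ltn_expl L0 (isT : (1 < 2)%N); lia.
have -> : Kr = \sum_(0 <= k < L0.+1) (1:R).
  rewrite (big_nat_widen 0 L0.+1 T.+1 xpredT) //.
  apply: eq_bigl => k /=; rewrite /lev; apply/idP/idP.
    move=> h; rewrite ltnS; exact: trunc_log_max.
  by move=> h; apply: leq_trans hL0; apply: leq_pexp2l.
rewrite sumr_const_nat subn0 -natr1 addrC lerD2l /log2r.
have l2 : 0 < ln (2:R) by apply: ln_gt0; lra.
rewrite ler_pdivlMr //.
have T0 : (0:R) < T%:R by rewrite ltr0n.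
have : ln ((2 ^ L0)%:R : R) <= ln (T%:R : R).
  by rewrite ler_ln ?posrE ?ltr0n ?expn_gt0 // ler_nat.
rewrite natrX lnXn //; last by lra.
Qed.

Lemma cT_ok : (2 <= T)%N -> 0 <= cT R T /\ 8 * T%:R * Kr <= expR (cT R T).
Proof.
move=> T2.
have T2r : (2:R) <= T%:R by rewrite (ler_nat R 2 T).
have lT : 0 <= ln (T%:R : R) by apply: ln_ge0; lra.
have l2 : 0 < ln (2:R) by apply: ln_gt0; lra.
have lg : 0 <= log2r (T%:R : R) by rewrite /log2r divr_ge0 // ltW.
have l1T : 1 <= ln (1 + T%:R : R).
  have p1 : 0 < 1 + T%:R :> R by lra.
  have : ln (expR 1) <= ln (1 + T%:R : R).
    rewrite ler_ln ?posrE ?expR_gt0 //.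
    have := @e_ub R; lra.
  by rewrite expRK.
set a2 := 1 + log2r (T%:R : R).
set a3 := (5 + 3 * ln (1 + T%:R : R)) / 2.
have a2p : 1 <= a2 by rewrite /a2; lra.
have a3p : 4 <= a3 by rewrite /a3 ler_pdivlMr //; lra.
have la2 : 0 <= ln a2 by apply: ln_ge0.
have la3 : 0 <= ln a3 by apply: ln_ge0; lra.
split; first by rewrite /cT -/a2 -/a3; lra.
rewrite /cT -/a2 -/a3 !expRD lnK ?posrE; last by rewrite ltr0n; lia.
rewrite lnK ?posrE; last by lra.
rewrite lnK ?posrE; last by lra.
have e0 := @e_lb R.
have Kb := Kr_bound (leq_trans (isT : (1 <= 2)%N) T2).
have K0 := Kr_ge0.
have T0 : (0:R) <= T%:R by lra.
have Tp : (0:R) < T%:R by lra.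
have h1 : 9/4 * T%:R <= expR 1 * T%:R :> R by rewrite ler_pM2r.
have h2 : 9/4 * T%:R * a2 <= expR 1 * T%:R * a2 by rewrite ler_pM2r //; lra.
have h3 : 9/4 * T%:R * a2 * 4 <= expR 1 * T%:R * a2 * a3.
  apply: ler_pM => //; apply: mulr_ge0; [apply: mulr_ge0 => //; lra | lra].
have h4 : 8 * T%:R * Kr <= 9 * T%:R * a2.
  have : T%:R * Kr <= T%:R * a2 by apply: ler_wpM2l.
  have : 0 <= T%:R * Kr by apply: mulr_ge0.
  lra.
lra.
Qed.

Lemma sq_le (a b : R) : 0 <= b -> a ^+ 2 <= b ^+ 2 -> a <= b.
Proof. move=> b0 h; rewrite !expr2 in h; case: (leP a b) => // ab; nra. Qed.

Lemma main (u : nat -> 'rV[R]_d) (i : nat) :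
  (forall t, (1 <= t <= T.+1)%N -> Omega (u t)) ->
  (1 <= i <= up_log 2 T)%N ->
  let PT := \sum_(1 <= t < T.+1) norm2 (u t.+1 - u t) in
  D * 2 ^+ (i.-1) < PT -> PT <= D * 2 ^+ i ->
  \sum_(1 <= t < T.+1) f t (w t) - \sum_(1 <= t < T.+1) f t (u t)
    <= (D * G / 2 + 3 * G / 2 * Num.sqrt (2 * D * PT)
        + Num.sqrt (3 * cT R T * (1 + 2 * PT / D))) * Num.sqrt (T%:R).
Proof.
move=> uO /andP[i1 iS] PT hPl hPu.
have D0' : 0 < D := D0. have G0' : 0 < G := G0.
set s := up_log 2 T in iS.
have s0 : (0 < s)%N by lia.
have T1 : (1 < T)%N by move: s0; rewrite /s up_log_gt0 => /andP[_ ->].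
have hb := up_log_bounds (isT : (1 < 2)%N) T1.
move: hb; rewrite /= -/s => /andP[sb1 sb2].
have s2 : (2 ^ s <= 2 * T)%N.
  by rewrite -(prednK s0) expnS; rewrite leq_mul2l /=; apply: ltnW.
set k := (s - i)%N.
have ks : (k <= s.-1)%N by lia.
have Lk : (2 ^ k <= 2 ^ s.-1)%N by apply: leq_pexp2l.
have lk : lev k by rewrite /lev; lia.
have kT : (k < T.+1)%N by have := ltn_expl k (isT : (1 < 2)%N); rewrite /lev in lk; lia.
have Ls : (2 ^ k * 2 ^ i = 2 ^ s)%N by rewrite -expnD subnK.
have OG := ogd_sum k uO (leqnn T).
rewrite -/PT in OG.
clearbody PT.
have [c0 hc] := cT_ok T1.
set c := cT R T in c0 hc *.
have MB := meta_bound kT lk c0 hc (leqnn T).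
have L0 : (0 < 2 ^ k)%N by rewrite expn_gt0.
have nb : (nblk (2 ^ k) T <= 2 ^ i)%N.
  rewrite nblk_pos //; last by lia.
  rewrite ltn_divLR // mulnC Ls; lia.
have q0 : 0 < 2 ^+ i.-1 :> R by apply: exprn_gt0.
set q := 2 ^+ i.-1 : R in q0 hPl.
have e2i : 2 ^+ i = 2 * q :> R by rewrite /q -exprS prednK.
clearbody q.
rewrite e2i in hPu.
have Dq : 0 < D * q by apply: mulr_gt0.
have PT0 : 0 < PT by xlra.
have nbR : (nblk (2 ^ k) T)%:R <= 1 + 2 * PT / D.
  apply: (le_trans (y := (2 ^ i)%:R)); first by rewrite ler_nat.
  rewrite natrX e2i.
  have : 2 * q <= 2 * PT / D by rewrite ler_pdivlMr //; xlra.
  xlra.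
have Tr0 : (0:R) <= T%:R by [].
move: nbR MB; move: (nblk (2 ^ k) T)%:R => N nbR MB.
have Mf : \sum_(1 <= t < T.+1) rr k t <=
          Num.sqrt (3 * c * (1 + 2 * PT / D)) * Num.sqrt T%:R.
  have h0 : 0 <= 3 * c * (1 + 2 * PT / D).
    apply: mulr_ge0; first by apply: mulr_ge0.
    have : 0 <= 2 * PT / D by apply: divr_ge0; xlra.
    xlra.
  rewrite -sqrtrM //; apply: le_trans MB _; rewrite ler_sqrt; last by apply: mulr_ge0.
  apply: ler_wpM2r => //; apply: ler_wpM2l => //; apply: mulr_ge0 => //.
clear nbR MB nb.
have A1 : dotv (x k 1 - u 1) (x k 1 - u 1) <= D ^+ 2.
  by apply: norm2_le_sq; apply: diam; [exact: x_in | apply: uO].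
have A2 := dotv_ge0 (x k T.+1 - u T.+1).
set E := \sum_(1 <= t < T.+1) (f t (x k t) - f t (u t)) in OG.
have et := eta_gt0 k.
pose sg := Num.sqrt (2 ^ k)%:R : R.
have sg0 : 0 < sg by rewrite sqrtr_gt0 ltr0n.
have eE : eta_lvl D G k = D / (G * sg) by [].
have sg2 : sg ^+ 2 = (2 ^ k)%:R by rewrite sqr_sqrtr // ler0n.
have ha : sg <= Num.sqrt (T%:R : R) by rewrite /sg ler_sqrt // ler_nat.
clearbody sg.
set tau := Num.sqrt (T%:R : R) in ha Mf *.
set rho := Num.sqrt (2 * D * PT).
have tau0 : 0 <= tau by apply: sqrtr_ge0.
have rho0 : 0 <= rho by apply: sqrtr_ge0.
have tau2 : tau ^+ 2 = T%:R by rewrite sqr_sqrtr.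
have rho2 : rho ^+ 2 = 2 * D * PT by rewrite sqr_sqrtr //; apply: mulr_ge0; xlra.
clearbody tau rho.
have Eb1 : E <= D * G * sg / 2 + G * PT * sg + D * G * T%:R / (2 * sg).
  have Q : 2 * eta_lvl D G k * E <= D ^+ 2 + 2 * D * PT + eta_lvl D G k ^+ 2 * G ^+ 2 * T%:R.
    xlra.
  have et2 : 0 < 2 * eta_lvl D G k by apply: mulr_gt0.
  have -> : D * G * sg / 2 + G * PT * sg + D * G * T%:R / (2 * sg) =
     (D ^+ 2 + 2 * D * PT + eta_lvl D G k ^+ 2 * G ^+ 2 * T%:R) / (2 * eta_lvl D G k).
    rewrite eE; field.
    by rewrite (gt_eqF D0) (gt_eqF G0) (gt_eqF sg0).
  by rewrite ler_pdivlMr // mulrC.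
have LT : (2 ^ k)%:R <= T%:R :> R by rewrite ler_nat.
have LsR : (2 ^ k)%:R * (2 * q) = (2 ^ s)%:R :> R by rewrite -e2i -natrX -natrM Ls.
have s2R : (2 ^ s)%:R <= 2 * T%:R :> R by rewrite -natrM ler_nat.
have sTR : T%:R <= (2 ^ s)%:R :> R by rewrite ler_nat.
have Lp : 0 < (2 ^ k)%:R :> R by rewrite ltr0n.
move: LT LsR s2R sTR Lp sg2; move: (2 ^ k)%:R (2 ^ s)%:R => Lr Sr LT LsR s2R sTR Lp sg2.
have hb : PT * sg <= rho * tau.
  apply: sq_le; first by apply: mulr_ge0.
  rewrite !exprMn sg2 tau2 rho2.
  have hb1 : PT * Lr <= D * (2 * q) * Lr by apply: ler_wpM2r => //; apply: ltW.
  have : PT * (PT * Lr) <= PT * (2 * D * T%:R).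
    apply: ler_wpM2l; first by apply: ltW.
    have e : D * (2 * q) * Lr = D * Sr by rewrite -LsR; ring.
    have : D * Sr <= D * (2 * T%:R) by apply: ler_wpM2l => //; apply: ltW.
    xlra.
  rewrite expr2; xlra.
have hc' : D * T%:R <= rho * tau * sg.
  apply: sq_le; first by apply: mulr_ge0 => //; [apply: mulr_ge0 | apply: ltW].
  rewrite !exprMn sg2 tau2 rho2.
  have k1 : D * T%:R <= 2 * PT * Lr.
    have : D * (2 * q) * Lr <= PT * 2 * Lr.
      apply: ler_wpM2r; [by apply: ltW | xlra].
    have e : D * (2 * q) * Lr = D * Sr by rewrite -LsR; ring.
    have : D * T%:R <= D * Sr by apply: ler_wpM2l => //; apply: ltW.
    xlra.
  have : D * T%:R * (D * T%:R) <= D * T%:R * (2 * PT * Lr).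
    by apply: ler_wpM2l => //; apply: mulr_ge0 => //; apply: ltW.
  rewrite expr2; xlra.
have hc2 : D * G * T%:R / (2 * sg) <= G * rho * tau / 2.
  rewrite ler_pdivrMr; last by apply: mulr_gt0.
  have : G * (D * T%:R) <= G * (rho * tau * sg) by apply: ler_wpM2l => //; apply: ltW.
  have -> : G * rho * tau / 2 * (2 * sg) = G * (rho * tau * sg) by field.
  xlra.
have ha2 : D * G * sg / 2 <= D * G * tau / 2.
  by apply: ler_wpM2r => //; apply: ler_wpM2l => //; apply: mulr_ge0; apply: ltW.
have hb2 : G * PT * sg <= G * (rho * tau) by rewrite -mulrA; apply: ler_wpM2l => //; apply: ltW.
have Eb : E <= D * G / 2 * tau + 3 * G / 2 * rho * tau by xlra.
have split : \sum_(1 <= t < T.+1) f t (w t) - \sum_(1 <= t < T.+1) f t (u t) =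
   \sum_(1 <= t < T.+1) rr k t + E.
  by rewrite /E /rr -!sumrB -big_split /=; apply: eq_bigr => t _; ring.
rewrite split.
set SQ := Num.sqrt (3 * c * (1 + 2 * PT / D)) in Mf *.
xlra.
Qed.

End A1.

Unset Implicit Arguments.

Theorem lemma5 (R : realType) (d T : nat) (Omega : 'rV[R]_d -> Prop) (D G : R)
    (Pi : 'rV[R]_d -> 'rV[R]_d) (f : nat -> 'rV[R]_d -> R)
    (g : nat -> 'rV[R]_d -> 'rV[R]_d) (init : nat -> 'rV[R]_d)
    (w : nat -> 'rV[R]_d) (u : nat -> 'rV[R]_d) (i : nat) :
  convex_setv Omega ->
  is_euclid_proj Omega Pi ->
  0 < D -> 0 < G ->
  (forall t, (1 <= t <= T)%N -> convex_fun_on Omega (f t)) ->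
  (forall t x y, (1 <= t <= T)%N -> Omega x -> Omega y ->
     f t x + dotv (g t x) (y - x) <= f t y) ->
  (* (A1) *)
  (forall t x, (1 <= t <= T)%N -> Omega x -> norm2 (g t x) <= G) ->
  (* (A2) *)
  Omega 0 ->
  (forall x y, Omega x -> Omega y -> norm2 (x - y) <= D) ->
  (* (A3) *)
  (forall t x, (1 <= t <= T)%N -> Omega x -> 0 <= f t x <= 1) ->
  (* arbitrary initial points of the experts of the first intervals *)
  (forall k, Omega (init k)) ->
  AOD_plays T D G Pi f g init w ->
  (forall t, (1 <= t <= T.+1)%N -> Omega (u t)) ->
  (1 <= i <= up_log 2 T)%N ->
  let PT := \sum_(1 <= t < T.+1) norm2 (u t.+1 - u t) in
  D * 2 ^+ (i.-1) < PT -> PT <= D * 2 ^+ i ->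
  \sum_(1 <= t < T.+1) f t (w t) - \sum_(1 <= t < T.+1) f t (u t)
    <= (D * G / 2 + 3 * G / 2 * Num.sqrt (2 * D * PT)
        + Num.sqrt (3 * cT R T * (1 + 2 * PT / D))) * Num.sqrt (T%:R).
Proof.
move=> h1 h2 h3 h4 h5 h6 h7 h8 h9 h10 h11 h12 h13 h14.
exact: (main h1 h2 h3 h4 h5 h6 h7 h8 h9 h10 h11 h12 h13 h14).
Qed.
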